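(* Let $n\geq 2$. If a closed subgroup $H$ of $\mathrm{Aut}(\mathbb{A}^n_{\mathbb{C}})$ strictly contains $\mathcal{B}_n$, then $H$ contains a linear automorphism (i.e. an element $(\sum_j a_{1j}x_j,\dots,\sum_j a_{nj}x_j)$ with $(a_{ij})\in\mathrm{GL}_n(\mathbb{C})$) which does not belong to $\mathcal{B}_n$.
   Context: $\mathrm{Aut}(\mathbb{A}^n_{\mathbb{C}})$ is the group of polynomial automorphisms $f=(f_1,\dots,f_n)$ of $\mathbb{A}^n_{\mathbb{C}}$, viewed as an ind-group filtered by degree ($\deg f=\max\deg f_i$); a subset is closed if its intersection with each set of automorphisms of degree $\le d$ is Zariski closed in that variety (a locally closed subset of the affine space $(\mathbb{C}[x_1,\dots,x_n]_{\le d})^n$). $\mathcal{B}_n=\{f: f_i\in\mathbb{C}[x_i,\dots,x_n]\ \forall i\}$ is the triangular (Jonquières) subgroup. *)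

(* Defs.v *)
From HB Require Import structures.
From mathcomp Require Import all_boot all_order all_algebra.
From mathcomp Require Import reals.
From mathcomp Require Import complex.
From mathcomp Require Import mpoly.
Set Implicit Arguments. Unset Strict Implicit. Unset Printing Implicit Defensive.
Import Order.TTheory GRing.Theory Num.Theory.
Local Open Scope ring_scope.


Section PolyAut.
Variables (R : realType) (n : nat).
Local Notation C := (R[i]).

Definition pendo := n.-tuple {mpoly C[n]}.

Definition pcomp (f g : pendo) : pendo := [tuple (tnth f i) \mPo g | i < n].

Definition pid : pendo := [tuple 'X_i | i < n].

Definition pinverse (f g : pendo) : Prop := pcomp f g = pid /\ pcomp g f = pid.

Definition is_aut (f : pendo) : Prop := exists g : pendo, pinverse f g.

(* deg f = max_i deg f_i  (msize p = 1 + total degree, 0 for p = 0). *)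
Definition deg_le (d : nat) (f : pendo) : Prop := forall i : 'I_n, (msize (tnth f i) <= d.+1)%N.

(* Coordinates of the affine space (C[x_1..x_n]_{<= d})^n: pairs (i, m), with m a
   monomial of degree <= d; the coordinate is the coefficient of m in f_i. *)
Definition coord_index (d : nat) : finType := ('I_n * 'X_{1..n < d.+1})%type.

Definition coefvec (d : nat) (f : pendo) : 'I_#|coord_index d| -> C :=
  fun j => let im := enum_val j in (tnth f im.1)@_(bmnm im.2).

(* A subset A of Aut(A^n) is closed in the ind-group: for each d, A intersected with
   the automorphisms of degree <= d is the trace of a Zariski closed subset of the
   affine space (C[x]_{<=d})^n, i.e. of the common zero locus of a family S of
   polynomial functions in the coordinates. *)
Definition ind_closed (A : pendo -> Prop) : Prop :=
  forall d : nat, exists S : {mpoly C[#|coord_index d|]} -> Prop,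
    forall f : pendo, is_aut f -> deg_le d f ->
      (A f <-> (forall P, S P -> P.@[@coefvec d f] = 0)).

Definition is_aut_subgroup (H : pendo -> Prop) : Prop :=
  [/\ forall f, H f -> is_aut f,
      H pid,
      forall f g, H f -> H g -> H (pcomp f g)
    & forall f g, H f -> pinverse f g -> H g].

(* The triangular (de Jonquieres) subgroup: f automorphism with f_i in C[x_i,...,x_n]. *)
Definition jonq (f : pendo) : Prop :=
  is_aut f /\ forall (i : 'I_n) (m : 'X_{1..n}), m \in msupp (tnth f i) ->
                forall j : 'I_n, (j < i)%N -> m j = 0%N.

Definition linear_aut (f : pendo) : Prop :=
  exists a : 'M[C]_n, a \in unitmx /\
    forall i : 'I_n, tnth f i = \sum_(j < n) a i j *: 'X_j.

End PolyAut.

(* Main.v *)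
Require Import Defs.
From mathcomp Require Import all_boot all_order all_algebra.
From mathcomp Require Import reals complex mpoly.
From Stdlib Require Import Classical.
Set Implicit Arguments. Unset Strict Implicit. Unset Printing Implicit Defensive.
Import Order.TTheory GRing.Theory Num.Theory.
Local Open Scope ring_scope.

Section Main.
Variables (R : realType) (n : nat).
Local Notation C := (R[i]).
Local Notation P := {mpoly C[n]}.



Definition transl (a : 'I_n -> C) : n.-tuple P := [tuple 'X_k + (a k)%:MP | k < n].

Lemma mderivXi (i j : 'I_n) : ('X_i : P)^`M(j) = ((i == j)%:R)%:MP.
Proof.
rewrite mderivX mnm1E; case: eqP => [->|_].
  by rewrite (_ : (U_(j) - U_(j))%MM = 0%MM) ?mpolyX0 ?scale1r //; apply/mnmP => k; rewrite mnmBE mnm0E subnn.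
by rewrite !scale0r mpolyC0.
Qed.

Definition QT a j (r : P) := (r \mPo transl a)^`M(j) = r^`M(j) \mPo transl a.

Lemma cMT a (u v : P) : (u * v) \mPo transl a = (u \mPo transl a) * (v \mPo transl a).
Proof. exact: (comp_mpoly_is_multiplicative _).1. Qed.

Lemma QT_M a j r q : QT a j r -> QT a j q -> QT a j (r * q).
Proof.
rewrite /QT => hp hq.
rewrite (cMT a r q) (mderivM j (r \mPo transl a) (q \mPo transl a)) (mderivM j r q).
rewrite (comp_mpolyD (transl a) (r^`M(j) * q) (r * q^`M(j))).
rewrite (cMT a (r^`M(j)) q) (cMT a r (q^`M(j))).
congr (_ * _ + _ * _). exact hp. exact hq.
Qed.

Lemma derT a j (p : P) : QT a j p.
Proof.
have Q1 : QT a j 1 by rewrite /QT comp_mpoly1 -mpolyC1 mderivC comp_mpolyC.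
have QX i : QT a j 'X_i.
  rewrite /QT comp_mpolyXU -tnth_nth tnth_mktuple mderivD mderivC mderivXi addr0.
  by rewrite comp_mpolyC.
have QXm m : QT a j 'X_[m].
  rewrite mpolyXE_id; apply: big_ind; [exact Q1 | exact: QT_M | move=> i _].
  elim: (m i) => [|k ih]; first by rewrite expr0.
  rewrite exprS; apply: QT_M; [exact (QX i) | exact ih].
elim/mpolyind: p => [|c m p _ _ ih]; first by rewrite /QT comp_mpoly0 !mderiv0 comp_mpoly0.
move: ih (QXm m); rewrite /QT => ih hm.
rewrite comp_mpolyD mderivD comp_mpolyZ mderivZ mderivD mderivZ comp_mpolyD comp_mpolyZ.
congr (_ *: _ + _); [exact hm | exact ih].
Qed.


Lemma prod0X (m : 'X_{1..n}) : \prod_(i < n) (0 : C) ^+ (m i) = (m == 0%MM)%:R.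
Proof.
case: eqP => [->|/eqP nz].
  by rewrite big1 // => i _; rewrite mnm0E expr0.
have [i hi] : exists i, m i != 0%N.
  apply/existsP; apply: contraR nz; rewrite negb_exists => /forallP h.
  by apply/eqP/mnmP => i; rewrite mnm0E; move: (h i); rewrite negbK => /eqP.
by rewrite (bigD1 i) //= expr0n (negbTE hi) mul0r.
Qed.

Lemma coef0E (p : P) : p@_0 = p.@[fun _ => 0].
Proof.
elim/mpolyind: p => [|c m p _ _ ih]; first by rewrite mcoeff0 meval0.
rewrite mcoeffD mevalD mcoeffZ mevalZ ih mevalX prod0X mcoeffX.
by rewrite eq_sym.
Qed.

Lemma msize_le (p : P) k : (forall m, m \in msupp p -> (mdeg m < k)%N) -> (msize p <= k)%N.
Proof. by move=> h; rewrite msizeE; apply/bigmax_leqP_seq => m /h. Qed.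

Lemma coefUT a j (p : P) : (p \mPo transl a)@_(U_(j)) = (p^`M(j)).@[a].
Proof.
have := mcoeff_mderiv j (p \mPo transl a) 0%MM.
rewrite add0m mnm0E mulr1n => <-.
rewrite (derT a j p) coef0E comp_mpoly_meval; apply: meval_eq => k.
by rewrite tnth_mktuple mevalD mevalXU mevalC add0r.
Qed.




Definition ordge k (q : P) := forall m : 'X_{1..n}, (mdeg m < k)%N -> q@_m = 0.

Lemma ordgeM a b (p q : P) : ordge a p -> ordge b q -> ordge (a + b) (p * q).
Proof.
move=> hp hq m hm; rewrite mcoeffM big1 // => k /eqP e.
have := etrans (congr1 mdeg e) (mdegD _ _).
case: (ltnP (mdeg k.1) a) => h1 e2; first by rewrite hp ?mul0r.
by rewrite hq ?mulr0 //; rewrite e2 in hm; rewrite -(ltn_add2l (mdeg k.1)); apply: (leq_trans hm); rewrite leq_add2r.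
Qed.

Lemma ordge_prod (F : 'I_n -> P) (G : 'I_n -> nat) :
  (forall i, ordge (G i) (F i)) -> ordge (\sum_i G i) (\prod_i F i).
Proof.
move=> h; elim/big_rec2: _ => [m|i s q _ ih]; first by rewrite ltn0.
exact: ordgeM.
Qed.

Lemma ordgeX k e (q : P) : ordge k q -> ordge (k * e) (q ^+ e).
Proof.
move=> h; elim: e => [|e ih]; first by move=> m; rewrite muln0 ltn0.
by rewrite exprS mulnS; apply: ordgeM.
Qed.

Lemma ordge1 (q : P) : q@_0 = 0 -> ordge 1 q.
Proof. by move=> h m; rewrite ltnS leqn0 mdeg_eq0 => /eqP ->. Qed.

Lemma coefU_compX (m : 'X_{1..n}) (h : n.-tuple P) j :
  (forall k, (tnth h k)@_0 = 0) ->
  ('X_[m] \mPo h)@_(U_(j)) = \sum_k ('X_[m] : P)@_(U_(k)) * (tnth h k)@_(U_(j)).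
Proof.
move=> h0.
case: (ltngtP (mdeg m) 1) => hm.
- move: hm; rewrite ltnS leqn0 mdeg_eq0 => /eqP ->.
  rewrite mpolyX0 comp_mpoly1 mcoeff1 big1.
    by case: eqP => // /(congr1 mdeg); rewrite mdeg1 mdeg0.
  by move=> k _; rewrite mcoeff1; case: eqP => [/(congr1 mdeg)|]; rewrite ?mdeg1 ?mdeg0 // mul0r.
- rewrite comp_mpolyX [RHS]big1.
    have := @ordge_prod (fun i => tnth h i ^+ m i) (fun i => m i).
    move=> H; rewrite H //; try (by rewrite -mdegE mdeg1).
    by move=> i; have := @ordgeX 1 (m i) _ (ordge1 (h0 i)); rewrite mul1n.
  move=> k _; rewrite mcoeffX; case: eqP => [/(congr1 mdeg)|]; rewrite ?mdeg1 ?mul0r //.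
  by move=> e; rewrite e ltnn in hm.
- have /mdeg1P [i /eqP ->] : mdeg m == 1%N by rewrite hm.
  rewrite comp_mpolyXU -tnth_nth (bigD1 i) //= mcoeffXU eqxx mul1r big1 ?addr0 //.
  by move=> k /negbTE nk; rewrite mcoeffXU eq_sym nk mul0r.
Qed.


Lemma coefU_comp (p : P) (h : n.-tuple P) j :
  (forall k, (tnth h k)@_0 = 0) ->
  (p \mPo h)@_(U_(j)) = \sum_k p@_(U_(k)) * (tnth h k)@_(U_(j)).
Proof.
move=> h0; elim/mpolyind: p => [|c m p _ _ ih].
  by rewrite comp_mpoly0 mcoeff0 big1 // => k _; rewrite mcoeff0 mul0r.
rewrite comp_mpolyD mcoeffD comp_mpolyZ mcoeffZ.
rewrite [RHS](eq_bigr (fun k => c * (('X_[m] : P)@_(U_(k)) * (tnth h k)@_(U_(j))) + p@_(U_(k)) * (tnth h k)@_(U_(j)))); last first.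
  by move=> k _; rewrite mcoeffD mcoeffZ mulrDl mulrA.
rewrite big_split /= -mulr_sumr.
congr (_ * _ + _); [exact: (coefU_compX m j h0) | exact ih].
Qed.

Definition linp (g : n.-tuple P) : 'M[C]_n := \matrix_(i, j) (tnth g i)@_(U_(j)).

Definition lmapA (A : 'M[C]_n) : pendo R n := [tuple \sum_j A i j *: 'X_j | i < n].

Lemma lin_comp (g h : pendo R n) : (forall k, (tnth h k)@_0 = 0) ->
  linp (Defs.pcomp g h) = linp g *m linp h.
Proof.
move=> h0; apply/matrixP => i j; rewrite !mxE tnth_mktuple coefU_comp //.
by apply: eq_bigr => k _; rewrite !mxE.
Qed.

Lemma lmap_comp A B : Defs.pcomp (lmapA A) (lmapA B) = lmapA (A *m B).
Proof.
apply: eq_from_tnth => i; rewrite !tnth_mktuple raddf_sum /=.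
under eq_bigr do rewrite comp_mpolyZ comp_mpolyXU -tnth_nth tnth_mktuple scaler_sumr.
rewrite exchange_big /=; apply: eq_bigr => k _; rewrite mxE scaler_suml.
by apply: eq_bigr => j _; rewrite scalerA.
Qed.

Lemma lmap1 : lmapA 1%:M = @pid R n.
Proof.
apply: eq_from_tnth => i; rewrite !tnth_mktuple (bigD1 i) //= mxE eqxx scale1r big1 ?addr0 //.
by move=> j /negbTE ji; rewrite mxE eq_sym ji scale0r.
Qed.

Lemma lin_pid : linp (@pid R n) = 1%:M.
Proof. by apply/matrixP => i j; rewrite !mxE tnth_mktuple mcoeffXU. Qed.

Lemma coef_lmap A i m : (tnth (lmapA A) i)@_m = \sum_j A i j * (U_(j)%MM == m)%:R.
Proof.
rewrite tnth_mktuple raddf_sum /=; apply: eq_bigr => j _.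
by rewrite mcoeffZ mcoeffX.
Qed.

Lemma lin_lmap A : linp (lmapA A) = A.
Proof.
apply/matrixP => i j; rewrite mxE coef_lmap (bigD1 j) //= eqxx mulr1 big1 ?addr0 //.
move=> k /negbTE kj; case: eqP; rewrite ?mulr0 // => /mnmP /(_ k).
by rewrite !mnm1E eqxx eq_sym kj.
Qed.




Lemma poly_nonroot (Q : {poly C}) : Q != 0 -> exists k : nat, Q.[k.+1%:R] != 0.
Proof.
move=> nz; apply: NNPP => hn.
have h k : Q.[k.+1%:R] = 0.
  by apply: NNPP => hk; apply: hn; exists k; apply/eqP.
pose rs := [seq (k.+1%:R : C) | k <- iota 0 (size Q)].
have A : all (root Q) rs by apply/allP => x /mapP [k _ ->]; apply/rootP.
have U : uniq rs.
  by rewrite map_inj_uniq ?iota_uniq // => a b /eqP; rewrite eqr_nat => /eqP [].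
by have := max_poly_roots nz A U; rewrite size_map size_iota ltnn.
Qed.

Fixpoint psi (B : nat) (s : seq nat) : nat :=
  if s is x :: s' then (x + B * psi B s')%N else 0%N.

Lemma sum_psi B k (F : 'I_k -> nat) :
  (\sum_(i < k) B ^ i * F i)%N = psi B (map F (enum 'I_k)).
Proof.
elim: k F => [|k ih] F; first by rewrite big_ord0 enum_ord0.
rewrite big_ord_recl enum_ordSl /= expn0 mul1n; congr (_ + _)%N.
rewrite -map_comp -(ih (F \o lift ord0)) big_distrr /=.
by apply: eq_bigr => i _; rewrite /bump /= add1n expnS mulnA.
Qed.

Lemma psi_inj B s t : (0 < B)%N -> size s = size t ->
  all (fun x => x < B)%N s -> all (fun x => x < B)%N t -> psi B s = psi B t -> s = t.
Proof.
move=> B0; elim: s t => [|x s ih] [|y t] //= [st] /andP [xB sB] /andP [yB tB] e.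
have xy : x = y.
  have := congr1 (modn^~ B) e.
  by rewrite ![(_ + B * _)%N]addnC ![(B * _)%N]mulnC !modnMDl !modn_small.
subst y; congr (_ :: _); apply: ih => //.
by move: e => /eqP; rewrite eqn_add2l eqn_pmul2l // => /eqP.
Qed.



Lemma mnm_le_mdeg (m : 'X_{1..n}) i : (m i <= mdeg m)%N.
Proof. by rewrite mdegE (bigD1 i) //= leq_addr. Qed.

Lemma phi_inj B (a b : 'X_{1..n}) : (0 < B)%N ->
  (forall i : 'I_n, a i < B)%N -> (forall i : 'I_n, b i < B)%N ->
  (\sum_(i < n) B ^ i * a i)%N = (\sum_(i < n) B ^ i * b i)%N -> a = b.
Proof.
move=> B0 ha hb; rewrite !sum_psi => e.
have := psi_inj B0 _ _ _ e; rewrite !size_map => /(_ erefl).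
have all_ok (c : 'X_{1..n}) : (forall i : 'I_n, c i < B)%N ->
    all (fun x => x < B)%N [seq c i | i <- enum 'I_n].
  by move=> hc; apply/allP => x /mapP [i _ ->].
move=> /(_ (all_ok _ ha) (all_ok _ hb)) /eq_in_map h.
by apply/mnmP => i; apply: h; rewrite mem_enum.
Qed.

Lemma nonvanish (D : P) : D != 0 -> exists v : 'I_n -> C, D.@[v] != 0.
Proof.
move=> nz.
have [m0 hm0] : exists m0, m0 \in msupp D.
  apply: NNPP => h; move/negP: nz; apply; apply/eqP/mpolyP => m; rewrite mcoeff0.
  apply/eqP; rewrite mcoeff_eq0; apply/negP => hm; apply: h; by exists m.
pose B := msize D.
have hB m : m \in msupp D -> forall i, (m i < B)%N.
  by move=> hm i; exact: leq_ltn_trans (mnm_le_mdeg m i) (msize_mdeg_lt hm).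
have B0 : (0 < B)%N by exact: leq_ltn_trans (leq0n _) (msize_mdeg_lt hm0).
pose phi (m : 'X_{1..n}) := (\sum_(i < n) B ^ i * m i)%N.
pose Q : {poly C} := \sum_(m <- msupp D) D@_m *: 'X^(phi m).
have cQ : Q`_(phi m0) = D@_m0.
  rewrite coef_sum (bigD1_seq m0) ?msupp_uniq //= coefZ coefXn eqxx mulr1 big1_seq ?addr0 //.
  move=> m /andP [nm hm]; rewrite coefZ coefXn; case: eqP; rewrite ?mulr0 // => e.
  by move: nm; rewrite (phi_inj B0 (hB _ hm0) (hB _ hm) e) eqxx.
have Qnz : Q != 0.
  apply/eqP => Q0; move: cQ; rewrite Q0 coef0 => /esym/eqP; rewrite mcoeff_eq0 hm0 //.
have [k hk] := poly_nonroot Qnz.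
exists (fun i => k.+1%:R ^+ (B ^ i)).
suff <- : Q.[k.+1%:R] = D.@[fun i => k.+1%:R ^+ (B ^ i)] by [].
rewrite mevalE horner_sum; apply: eq_bigr => m _; rewrite hornerZ hornerXn; congr (_ * _).
by rewrite /phi -prodrXr; apply: eq_bigr => i _; rewrite exprM.
Qed.




Definition hom (s : C) : pendo R n := [tuple s *: 'X_k | k < n].

Lemma transl_comp a b : Defs.pcomp (transl a) (transl b) = transl (fun k => b k + a k).
Proof.
apply: eq_from_tnth => k; rewrite !tnth_mktuple comp_mpolyD comp_mpolyXU -tnth_nth.
by rewrite tnth_mktuple comp_mpolyC mpolyCD addrA.
Qed.

Lemma transl_pid a : (forall k, a k = 0) -> transl a = @pid R n.
Proof. by move=> h; apply: eq_from_tnth => k; rewrite !tnth_mktuple h mpolyC0 addr0. Qed.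

Lemma hom_comp s t : Defs.pcomp (hom s) (hom t) = hom (s * t).
Proof.
apply: eq_from_tnth => k; rewrite !tnth_mktuple comp_mpolyZ comp_mpolyXU -tnth_nth.
by rewrite tnth_mktuple scalerA.
Qed.

Lemma hom_pid : hom 1 = @pid R n.
Proof. by apply: eq_from_tnth => k; rewrite !tnth_mktuple scale1r. Qed.

Lemma jonq_transl a : jonq (transl a).
Proof.
split.
  exists (transl (fun k => - a k)); split; rewrite transl_comp transl_pid // => k.
    by rewrite addNr. by rewrite addrN.
move=> i m; rewrite tnth_mktuple mcoeff_msupp mcoeffD mcoeffX mcoeffC => h j ji.
have [e|] := eqVneq m U_(i)%MM; first by rewrite e mnm1E; case: eqP ji => [->|]; rewrite ?ltnn.
rewrite eq_sym => /negbTE e; move: h; rewrite e add0r.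
have [->|/negbTE nm] := eqVneq m 0%MM; first by rewrite mnm0E.
by rewrite mulr0 eqxx.
Qed.

Lemma jonq_hom s : s != 0 -> jonq (hom s).
Proof.
move=> s0; split.
  exists (hom s^-1); split; rewrite hom_comp ?mulfV ?mulVf ?hom_pid //.
move=> i m; rewrite tnth_mktuple mcoeff_msupp mcoeffZ mcoeffX => h j ji.
have [e|] := eqVneq m U_(i)%MM; first by rewrite e mnm1E; case: eqP ji => [->|]; rewrite ?ltnn.
by rewrite eq_sym => /negbTE e; move: h; rewrite e mulr0 eqxx.
Qed.

Lemma coef_comp_hom (p : P) s m : (p \mPo hom s)@_m = s ^+ mdeg m * p@_m.
Proof.
elim/mpolyind: p => [|c m' p _ _ ih]; first by rewrite comp_mpoly0 !mcoeff0 mulr0.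
rewrite comp_mpolyD comp_mpolyZ !mcoeffD !mcoeffZ.
have -> : 'X_[m'] \mPo hom s = s ^+ mdeg m' *: 'X_[m'].
  rewrite comp_mpolyX (eq_bigr (fun i => s ^+ m' i *: 'X_i ^+ m' i)).
    by rewrite scaler_prod prodrXr -mdegE -mpolyXE_id.
  by move=> i _; rewrite tnth_mktuple exprZn.
rewrite mcoeffZ mcoeffX mulrDr; congr (_ + _); last exact ih.
by case: eqP => [->|_]; rewrite ?mulr1 ?mulr0 // mulrC.
Qed.


Lemma coef_conj (g : pendo R n) s k m :
  (tnth (Defs.pcomp (Defs.pcomp (hom s^-1) g) (hom s)) k)@_m = s ^+ mdeg m * (s^-1 * (tnth g k)@_m).
Proof.
rewrite {1}/Defs.pcomp tnth_mktuple coef_comp_hom /Defs.pcomp tnth_mktuple tnth_mktuple.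
by rewrite comp_mpolyZ comp_mpolyXU -tnth_nth mcoeffZ.
Qed.

End Main.

Theorem proposition3p3 (R : realType) (n : nat) (H : pendo R n -> Prop) :
  (2 <= n)%N ->
  is_aut_subgroup H ->
  ind_closed H ->
  (forall f, jonq f -> H f) ->
  (exists f, H f /\ ~ jonq f) ->
  exists f, H f /\ linear_aut f /\ ~ jonq f.
Proof.
move=> _; rewrite /is_aut_subgroup => -[Haut Hid Hcomp Hinv] Hcl HB [f [Hf nf]].
have [i [j [ji Dnz]]] : exists i j : 'I_n, (j < i)%N /\ (tnth f i)^`M(j) != 0.
  apply: NNPP => hn; apply: nf; split; first exact: Haut.
  move=> i m hm j ji; apply: NNPP => mj.
  apply: hn; exists i, j; split => //; apply/eqP => D0.
  have mj0 : (0 < m j)%N by rewrite lt0n; apply/eqP.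
  have le : (U_(j) <= m)%MM.
    by apply/mnm_lepP => k; rewrite mnm1E; case: eqP => [<-|].
  have := mcoeff_mderiv j (tnth f i) (m - U_(j))%MM.
  rewrite D0 mcoeff0 submK // mnmBE mnm1E eqxx subn1 prednK // => /esym/eqP.
  by rewrite mulrn_eq0 eqn0Ngt mj0 /= mcoeff_eq0 hm.
have [a Da] := nonvanish Dnz.
pose b k := (tnth f k).@[a].
pose F := Defs.pcomp f (transl a).
pose g := Defs.pcomp (transl (fun k => - b k)) F.
have Hg : H g.
  apply: (Hcomp); first exact/HB/jonq_transl.
  by apply: (Hcomp) => //; apply/HB/jonq_transl.
have Fk k : tnth F k = tnth f k \mPo transl a by rewrite tnth_mktuple.
have gk k : tnth g k = tnth F k + (- b k)%:MP.
  by rewrite [LHS]tnth_mktuple tnth_mktuple comp_mpolyD comp_mpolyXU -tnth_nth comp_mpolyC.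
have U0 l : (U_(l)%MM == 0%MM :> 'X_{1..n}) = false.
  by apply/negbTE/eqP => /(congr1 mdeg); rewrite mdeg1 mdeg0.
have g0 k : (tnth g k)@_0 = 0.
  rewrite gk mcoeffD mcoeffC eqxx mulr1 Fk coef0E comp_mpoly_meval.
  rewrite (@meval_eq _ _ _ a); first by rewrite addrN.
  by move=> l; rewrite tnth_mktuple mevalD mevalXU mevalC add0r.
have gU k l : (tnth g k)@_(U_(l)) = ((tnth f k)^`M(l)).@[a].
  by rewrite gk mcoeffD mcoeffC U0 mulr0 addr0 Fk coefUT.
clearbody g.
have [g' [gg' g'g]] := Haut _ Hg.
have Hg' : H g' := Hinv _ _ Hg (conj gg' g'g).
have g'0 k : (tnth g' k)@_0 = 0.
  have e := congr1 (fun t : pendo R n => (tnth t k)@_0) g'g.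
  rewrite /= /Defs.pcomp /pid !tnth_mktuple in e.
  have e2 : (tnth g' k \mPo g)@_0 = (tnth g' k).@[fun _ => 0].
    rewrite coef0E comp_mpoly_meval; apply: meval_eq => l; by rewrite -coef0E g0.
  by rewrite coef0E -e2 e mcoeffX U0.
have L1 : linp g *m linp g' = 1%:M by rewrite -lin_comp // gg' lin_pid.
have L2 : linp g' *m linp g = 1%:M by rewrite -lin_comp // g'g lin_pid.
pose L := lmapA (linp g).
have autL : is_aut L.
  by exists (lmapA (linp g')); split; rewrite lmap_comp ?L1 ?L2 lmap1.
have LU k l : (tnth L k)@_(U_(l)) = linp g k l.
  by have := congr1 (fun M : 'M[R[i]]_n => M k l) (lin_lmap (linp g)); rewrite /= [in LHS]mxE.
exists L; split; last split.
- pose d := maxn 1 (\max_(k < n) msize (tnth g k)).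
  have [S hS] := Hcl d.
  have U_inj (u v : 'I_n) : (U_(u)%MM == U_(v)%MM :> 'X_{1..n}) = (u == v).
    apply/eqP/eqP => [/mnmP/(_ u)|->//]; rewrite !mnm1E eqxx.
    by case: eqP.
  have degL : deg_le d L.
    move=> k; apply: msize_le => m; rewrite mcoeff_msupp (coef_lmap (linp g) k m) => nz.
    have [l hl] : exists l, U_(l)%MM == m.
      apply: NNPP => hn; move: nz; rewrite big1 ?eqxx // => l _.
      case: eqP => [e|]; last by rewrite mulr0.
      by exfalso; apply: hn; exists l; apply/eqP.
    by rewrite -(eqP hl) mdeg1 ltnS leq_maxl.
  apply/(hS L autL degL).2 => Pq SP.
  pose gs (s : R[i]) := Defs.pcomp (Defs.pcomp (hom n s^-1) g) (hom n s).
  have coef_gs s k m : s != 0 -> (tnth (gs s) k)@_m = (tnth g k)@_m * s ^+ (mdeg m).-1.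
    move=> s0; rewrite /gs (coef_conj g s k m).
    case e: (mdeg m) => [|e'].
      by move/eqP: e; rewrite mdeg_eq0 => /eqP ->; rewrite g0 !mulr0 mul0r.
    by rewrite exprS -mulrA mulrCA mulVKf // mulrC.
  have Hgs s : s != 0 -> H (gs s).
    move=> s0; apply: (Hcomp); last exact/HB/jonq_hom.
    by apply: (Hcomp); [apply/HB/jonq_hom; rewrite invr_eq0 | exact: Hg].
  have deg_gs s : s != 0 -> deg_le d (gs s).
    move=> s0 k; apply: msize_le => m; rewrite mcoeff_msupp (coef_gs s k m s0) => nz.
    have hm : m \in msupp (tnth g k).
      by rewrite mcoeff_msupp; apply: contraNneq nz => ->; rewrite mul0r.
    apply: (leq_trans (msize_mdeg_lt hm)); apply: leq_trans (leqnSn _).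
    apply: leq_trans (leq_maxr 1 _).
    exact: (leq_bigmax (F := fun k => msize (tnth g k)) k).
  have vanish s : s != 0 -> Pq.@[coefvec (d:=d) (gs s)] = 0.
    move=> s0; exact: ((hS (gs s) (Haut _ (Hgs s s0)) (deg_gs s s0)).1 (Hgs s s0) Pq SP).
  pose V (jj : 'I_#|coord_index n d|) : {poly R[i]} :=
    (tnth g (enum_val jj).1)@_(bmnm (enum_val jj).2) *: 'X^((mdeg (bmnm (enum_val jj).2)).-1).
  have hVs s : s != 0 -> forall jj, (V jj).[s] = coefvec (d:=d) (gs s) jj.
    by move=> s0 jj; rewrite /V hornerZ hornerXn /coefvec /= (coef_gs s _ _ s0).
  have hV0 jj : (V jj).[0] = coefvec (d:=d) L jj.
    rewrite /V hornerZ hornerXn /coefvec /=.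
    move: (enum_val jj) => [k bm] /=; move: (bmnm bm) => m.
    rewrite (coef_lmap (linp g) k m).
    case: (ltngtP (mdeg m) 1) => hm.
    - have m0 : m = 0%MM by apply/eqP; rewrite -mdeg_eq0 -leqn0 -ltnS.
      by rewrite m0 g0 mul0r big1 // => l _; rewrite U0 mulr0.
    - rewrite expr0n (_ : ((mdeg m).-1 == 0%N) = false) ?mulr0; last by case: (mdeg m) hm => [|[|]].
      rewrite big1 // => l _; case: eqP => [e|]; last by rewrite mulr0.
      by rewrite -e mdeg1 in hm.
    - have /mdeg1P [l0 /eqP e] : mdeg m == 1%N by rewrite hm.
      rewrite e mdeg1 expr0 mulr1 (bigD1 l0) //= U_inj eqxx mulr1 big1 ?addr0 ?mxE //.
      by move=> l /negbTE nl; rewrite U_inj nl mulr0.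
  pose Qp : {poly R[i]} := \sum_(mm <- msupp Pq) Pq@_mm *: \prod_jj (V jj) ^+ (mm jj).
  have hQ t : Qp.[t] = Pq.@[fun jj => (V jj).[t]].
    rewrite mevalE horner_sum; apply: eq_bigr => mm _; rewrite hornerZ horner_prod.
    by congr (_ * _); apply: eq_bigr => jj _; rewrite horner_exp.
  have Q0 : Qp = 0.
    apply: NNPP => /eqP nz; have [k hk] := poly_nonroot nz; move: hk; rewrite hQ.
    have s0 : (k.+1%:R : R[i]) != 0 by rewrite pnatr_eq0.
    by rewrite (meval_eq Pq (hVs _ s0)) vanish // eqxx.
  transitivity Pq.@[fun jj => (V jj).[0]].
    by apply: meval_eq => jj; rewrite hV0.
  by rewrite -hQ Q0 horner0.
- exists (linp g); split; first by case: (mulmx1_unit L1).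
  by move=> k; rewrite tnth_mktuple.
- case=> _ hj.
  have hm : U_(j)%MM \in msupp (tnth L i) by rewrite mcoeff_msupp LU mxE gU.
  by have := hj i _ hm j ji; rewrite mnm1E eqxx.
Qed.
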